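(* Let $\mathcal{H}$ be a finite hypothesis class and let $k\ge0$, $l\ge0$ be integers with $k\ge l$. Then \[ \mathrm{ELdim}(\mathcal{H}^l,k)\le e(k+1)\,|\mathcal{H}|^{\frac{1}{k+1-l}}. \]
   Context: Hypotheses are maps $\mathcal{X}\to\{-1,+1\}$. $\mathcal{C}^l$ is the class of functions $x\mapsto1-2I(x\in D)$ with $D\subseteq\mathcal{X}$, $|D|\le l$; $\mathcal{H}^l=\{x\mapsto h(x)c(x):h\in\mathcal{H},c\in\mathcal{C}^l\}$. Extended mistake tree w.r.t. a class $\mathcal{F}$: a finite full binary tree (possibly a single leaf) in which each internal node $v$ is labeled by a point $x_v\in\mathcal{X}$ and has two solid downward edges, to its left child (label $-1$) and right child (label $+1$), plus one dashed downward edge going to one of its two children; each leaf is labeled by some $h\in\mathcal{F}$ with $h(x_v)$ equal to the direction label ($-1$ left, $+1$ right) at every internal node $v$ on the path from the root to that leaf. A root-to-leaf path chooses at each internal node one of its downward edges; its length is its number of edges. The tree is $(k,m)$-difficult if every root-to-leaf path using at most $k$ solid edges has length at least $m$. The extended Littlestone dimension $\mathrm{ELdim}(\mathcal{F},k)$ is the supremum of $m$ such that a $(k,m)$-difficult extended mistake tree w.r.t. $\mathcal{F}$ exists (possibly $\infty$). *)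

(* Defs.v *)
From Stdlib Require Import Reals List Arith.
Open Scope R_scope.

(* Hypotheses X -> {-1,+1} are encoded as X -> bool, with true = +1, false = -1.
   A hypothesis class is a predicate on hypotheses. *)
Definition hclass (X : Type) := (X -> bool) -> Prop.

(* H^l = { x |-> h(x) c(x) : h in H, c in C^l }, where c = 1 - 2 I(x in D),
   |D| <= l.  A set D of size <= l is given as a list of length <= l;
   multiplying by c flips the sign exactly on D. *)
Definition Hl {X : Type} (H : hclass X) (l : nat) : hclass X :=
  fun g => exists h, H h /\ exists D : list X, (length D <= l)%nat /\
    forall x, (In x D -> g x = negb (h x)) /\ (~ In x D -> g x = h x).

(* Extended mistake trees: a leaf labeled by a hypothesis, or an internal node
   labeled by a point x, with a dashed-edge direction d (false = dashed edge
   to the left child, true = to the right child), and left/right children. *)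
Inductive emtree (X : Type) : Type :=
| Leaf : (X -> bool) -> emtree X
| Node : X -> bool -> emtree X -> emtree X -> emtree X.
Arguments Leaf {X}.
Arguments Node {X}.

(* Leaf labels: every leaf is labeled by some h in F with h(x_v) equal to the
   direction label (left = -1 = false, right = +1 = true) at every internal
   node v on its root path.  [cs] collects the (x_v, direction) pairs. *)
Fixpoint emtree_ok_aux {X : Type} (F : hclass X) (t : emtree X)
    (cs : list (X * bool)) : Prop :=
  match t with
  | Leaf h => F h /\ Forall (fun p => h (fst p) = snd p) cs
  | Node x _ L R => emtree_ok_aux F L ((x, false) :: cs) /\
                    emtree_ok_aux F R ((x, true) :: cs)
  end.

Definition emtree_wrt {X : Type} (F : hclass X) (t : emtree X) : Prop :=
  emtree_ok_aux F t nil.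

Inductive rpath {X : Type} : emtree X -> nat -> nat -> Prop :=
| rp_leaf (h : X -> bool) : rpath (Leaf h) 0 0
| rp_solidL (x : X) (d : bool) (L R : emtree X) (j n : nat) : rpath L j n -> rpath (Node x d L R) (S j) (S n)
| rp_solidR (x : X) (d : bool) (L R : emtree X) (j n : nat) : rpath R j n -> rpath (Node x d L R) (S j) (S n)
| rp_dashed (x : X) (d : bool) (L R : emtree X) (j n : nat) :
    rpath (if d then R else L) j n -> rpath (Node x d L R) j (S n).

Definition difficult {X : Type} (t : emtree X) (k m : nat) : Prop :=
  forall j n, rpath t j n -> (j <= k)%nat -> (m <= n)%nat.

(* ELdim(F,k) <= b  (b real), i.e. the supremum of the m for which a
   (k,m)-difficult extended mistake tree w.r.t. F exists is at most b. *)
Definition ELdim_le {X : Type} (F : hclass X) (k : nat) (b : R) : Prop :=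
  forall m : nat, (exists t, emtree_wrt F t /\ difficult t k m) -> INR m <= b.

Definition fin_class {X : Type} (n : nat) (h : nat -> X -> bool) : hclass X :=
  fun g => exists i, (i < n)%nat /\ g = h i.

Definition inj_below {X : Type} (n : nat) (h : nat -> X -> bool) : Prop :=
  forall i j, (i < n)%nat -> (j < n)%nat -> h i = h j -> i = j.

(* n^y for a natural n >= 0 and real y > 0 (0^y = 0). *)
Definition natpow (n : nat) (y : R) : R :=
  match n with O => 0 | _ => Rpower (INR n) y end.

(* Main.v *)
Require Import Defs.
From Stdlib Require Import Reals List Arith Lra Lia Classical.
Open Scope R_scope.

Fixpoint Bs (m s : nat) : nat :=
  match m with O => 1%nat | S m' =>
    match s with O => 1%nat | S s' => (Bs m' (S s') + Bs m' s')%nat end end.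

Lemma Bs_pos : forall m s, (1 <= Bs m s)%nat.
Proof. induction m; intros [|s]; simpl; try lia. specialize (IHm (S s)); lia. Qed.

Lemma Bs_mono : forall m s, (Bs m s <= Bs m (S s))%nat.
Proof.
  induction m; intros s; simpl; [lia|]. destruct s; [pose proof (Bs_pos m 1); lia|].
  pose proof (IHm (S s)); pose proof (IHm s); lia.
Qed.

Lemma Bs_0 : forall m, Bs m 0 = 1%nat.
Proof. destruct m; reflexivity. Qed.

Lemma Bs_step : forall m j, ((m - j) * Bs m j <= S j * Bs m (S j))%nat.
Proof.
  induction m; intros j; simpl; [lia|].
  destruct j.
  - specialize (IHm 0%nat). rewrite Bs_0 in *. lia.
  - pose proof (IHm (S j)) as H1. pose proof (IHm j) as H2.
    replace (S m - S j)%nat with (m - j)%nat by lia.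
    destruct (le_lt_dec m j).
    + replace (m - j)%nat with 0%nat by lia. lia.
    + replace (m - S j)%nat with (m - j - 1)%nat in H1 by lia.
      replace (m - j)%nat with (S (m - j - 1)) in * by lia. nia.
Qed.
Fixpoint dis {X : Type} (g : X -> bool) (cs : list (X * bool)) : nat :=
  match cs with nil => 0%nat
  | p :: cs' => ((if Bool.eqb (g (fst p)) (snd p) then 0 else 1) + dis g cs')%nat end.

Fixpoint sumn (f : nat -> nat) (n : nat) : nat :=
  match n with O => 0%nat | S n' => (sumn f n' + f n')%nat end.

Lemma sumn_ge : forall f n i, (i < n)%nat -> (f i <= sumn f n)%nat.
Proof. induction n; intros i Hi; simpl; [lia|].
  destruct (Nat.eq_dec i n); [subst; lia|]. specialize (IHn i ltac:(lia)); lia. Qed.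

Lemma sumn_add : forall f g n, (sumn f n + sumn g n)%nat = sumn (fun i => f i + g i)%nat n.
Proof. induction n; simpl; lia. Qed.

Lemma sumn_ext : forall f g n, (forall i, f i = g i) -> sumn f n = sumn g n.
Proof. intros f g n H; induction n; simpl; auto. Qed.

Lemma sumn_const : forall c n, sumn (fun _ => c) n = (n * c)%nat.
Proof. induction n; simpl; lia. Qed.

Lemma dis_leaf {X : Type} (h0 : X -> bool) : forall cs D,
  NoDup (map fst cs) ->
  (forall p, In p cs -> h0 (fst p) <> snd p -> In (fst p) D) ->
  (dis h0 cs <= length D)%nat.
Proof.
  induction cs as [|[x b] cs IH]; intros D ND HD; simpl; [lia|].
  inversion ND as [|? ? Hx ND']; subst.
  destruct (Bool.eqb (h0 x) b) eqn:E.
  - apply IH; auto. intros p Hp Hne. apply HD; simpl; auto.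
  - assert (Hin : In x D). { apply (HD (x,b)); simpl; auto.
      intro C. rewrite C, Bool.eqb_reflx in E. discriminate. }
    destruct (in_split _ _ Hin) as [D1 [D2 ->]].
    specialize (IH (D1 ++ D2) ND').
    assert (dis h0 cs <= length (D1 ++ D2))%nat.
    { apply IH. intros p Hp Hne.
      assert (In (fst p) (D1 ++ x :: D2)) by (apply HD; simpl; auto).
      apply in_app_or in H. apply in_or_app. destruct H as [H|[H|H]]; auto.
      exfalso. apply Hx. rewrite H. apply in_map; auto. }
    rewrite length_app in *. simpl. lia.
Qed.

Section Core.
Variable X : Type.
Variable n : nat.
Variable h : nat -> X -> bool.
Variable l : nat.
Let F := Hl (fin_class n h) l.

Lemma ok_exists : forall t cs, emtree_ok_aux F t cs ->
  exists g, Forall (fun p => g (fst p) = snd p) cs.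
Proof.
  induction t; intros cs Hok; simpl in Hok.
  - exists b; tauto.
  - destruct Hok as [H1 _]. destruct (IHt1 _ H1) as [g Hg].
    inversion Hg; subst. eauto.
Qed.

Lemma node_fresh : forall x d L R cs, emtree_ok_aux F (Node x d L R) cs ->
  ~ In x (map fst cs).
Proof.
  intros x d L R cs [H1 H2] Hin.
  destruct (ok_exists _ _ H1) as [g1 G1]. destruct (ok_exists _ _ H2) as [g2 G2].
  inversion G1; subst. inversion G2; subst. simpl in *.
  apply in_map_iff in Hin. destruct Hin as [[y b] [Hy Hp]]. simpl in Hy; subst.
  rewrite Forall_forall in *.
  specialize (H4 _ Hp). specialize (H6 _ Hp). simpl in *. congruence.
Qed.

Lemma leaf_alive : forall g cs, F g -> Forall (fun p => g (fst p) = snd p) cs ->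
  NoDup (map fst cs) -> exists i, (i < n)%nat /\ (dis (h i) cs <= l)%nat.
Proof.
  intros g cs [h0 [[i [Hi ->]] [D [HD Hfl]]]] Hf ND.
  exists i; split; auto.
  eapply Nat.le_trans; [|exact HD]. apply dis_leaf; auto.
  intros p Hp Hne. rewrite Forall_forall in Hf. specialize (Hf _ Hp).
  destruct (Hfl (fst p)) as [_ H2]. destruct (classic (In (fst p) D)) as [C|C]; auto.
  exfalso. apply Hne. rewrite <- Hf. symmetry; auto.
Qed.

Lemma alive : forall t cs, emtree_ok_aux F t cs -> NoDup (map fst cs) ->
  exists i, (i < n)%nat /\ (dis (h i) cs <= l)%nat.
Proof.
  induction t; intros cs Hok ND.
  - destruct Hok. eapply leaf_alive; eauto.
  - pose proof (node_fresh _ _ _ _ _ Hok) as Fr. destruct Hok as [H1 _].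
    destruct (IHt1 _ H1) as [i [Hi Hd]]. { simpl. constructor; auto. }
    exists i; split; auto. simpl in Hd. lia.
Qed.

Definition tw (m c : nat) : nat := if (c <=? l)%nat then Bs m (l - c) else 0%nat.
Definition W (m : nat) (cs : list (X * bool)) : nat := sumn (fun i => tw m (dis (h i) cs)) n.

Lemma tw_split : forall m c, (tw m c + tw m (S c))%nat = tw (S m) c.
Proof.
  intros m c. unfold tw.
  destruct (Nat.leb_spec c l); destruct (Nat.leb_spec (S c) l); try lia.
  - replace (l - c)%nat with (S (l - S c)) by lia. simpl. lia.
  - replace (l - c)%nat with 0%nat by lia. rewrite !Bs_0. lia.
Qed.

Lemma W_ge1 : forall m cs, (exists i, (i < n)%nat /\ (dis (h i) cs <= l)%nat) -> (1 <= W m cs)%nat.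
Proof.
  intros m cs [i [Hi Hd]]. unfold W. eapply Nat.le_trans; [|apply (sumn_ge _ _ i Hi)].
  unfold tw. destruct (Nat.leb_spec (dis (h i) cs) l); try lia. apply Bs_pos.
Qed.

Lemma W_split : forall m x cs,
  (W m ((x,false)::cs) + W m ((x,true)::cs))%nat = W (S m) cs.
Proof.
  intros. unfold W. rewrite sumn_add. apply sumn_ext. intros i. simpl.
  destruct (h i x); simpl; rewrite <- tw_split; lia.
Qed.

Lemma core : forall t cs, emtree_ok_aux F t cs -> NoDup (map fst cs) ->
  forall K m, (forall j len, rpath t j len -> (j < K)%nat -> (m <= len)%nat) ->
  (Bs m K <= W m cs)%nat.
Proof.
  induction t as [g|x d L IHL R IHR]; intros cs Hok ND K m Hd.
  - assert (Hal := W_ge1 m cs (alive _ _ Hok ND)).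
    destruct K; [rewrite Bs_0; auto|].
    assert (m <= 0)%nat by (apply (Hd 0%nat 0%nat); [constructor|lia]).
    destruct m; [simpl; auto|lia].
  - assert (Hal := W_ge1 m cs (alive _ _ Hok ND)).
    destruct K as [|K]; [rewrite Bs_0; auto|].
    destruct m as [|m]; [simpl; auto|].
    pose proof (node_fresh _ _ _ _ _ Hok) as Fr. destruct Hok as [H1 H2].
    assert (NDf : NoDup (map fst ((x,false)::cs))) by (simpl; constructor; auto).
    assert (NDt : NoDup (map fst ((x,true)::cs))) by (simpl; constructor; auto).
    rewrite <- (W_split m x cs). simpl Bs.
    destruct d.
    + assert (A1 : (Bs m (S K) <= W m ((x,true)::cs))%nat).
      { apply IHR; auto. intros j len Hp Hj.
        assert (S m <= S len)%nat; [|lia].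
        apply (Hd j); auto. apply rp_dashed. exact Hp. }
      assert (A2 : (Bs m K <= W m ((x,false)::cs))%nat).
      { apply IHL; auto. intros j len Hp Hj.
        assert (S m <= S len)%nat; [|lia].
        apply (Hd (S j)); [|lia]. apply rp_solidL. exact Hp. }
      lia.
    + assert (A1 : (Bs m (S K) <= W m ((x,false)::cs))%nat).
      { apply IHL; auto. intros j len Hp Hj.
        assert (S m <= S len)%nat; [|lia].
        apply (Hd j); auto. apply rp_dashed. exact Hp. }
      assert (A2 : (Bs m K <= W m ((x,true)::cs))%nat).
      { apply IHR; auto. intros j len Hp Hj.
        assert (S m <= S len)%nat; [|lia].
        apply (Hd (S j)); [|lia]. apply rp_solidR. exact Hp. }
      lia.
Qed.

End Core.
Lemma e_gt2 : 2 < exp 1.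
Proof. pose proof (exp_ineq1 1 ltac:(lra)). lra. Qed.

Lemma ratio_step : forall m k j, (j <= k)%nat ->
  INR m / (exp 1 * INR (k+1)) * INR (Bs m j) <= INR (Bs m (S j)).
Proof.
  intros m k j Hj.
  pose proof e_gt2 as E.
  assert (K1 : INR (S j) <= INR (k+1)) by (apply le_INR; lia).
  assert (K0 : 0 < INR (S j)) by (apply lt_0_INR; lia).
  assert (Bp : 1 <= INR (Bs m j)) by (apply (le_INR 1); apply Bs_pos).
  assert (Mono : INR (Bs m j) <= INR (Bs m (S j))) by (apply le_INR, Bs_mono).
  assert (M0 : 0 <= INR m) by apply pos_INR.
  set (r := INR m / (exp 1 * INR (k+1))).
  assert (r0 : 0 <= r) by (unfold r; apply Rmult_le_pos; [lra|]; left; apply Rinv_0_lt_compat; nra).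
  destruct (Rle_dec r 1) as [Hr|Hr].
  - nra.
  - assert (Hm : exp 1 * INR (k+1) < INR m).
    { unfold r in Hr. apply Rnot_le_lt in Hr.
      apply Rmult_lt_compat_r with (r := exp 1 * INR (k+1)) in Hr; [|nra].
      unfold Rdiv in Hr. rewrite Rmult_assoc, Rinv_l in Hr; nra. }
    assert (HS := Bs_step m j). apply le_INR in HS. rewrite !mult_INR in HS.
    rewrite minus_INR in HS.
    2:{ assert (INR j < INR m) by (rewrite S_INR in K0, K1; nra). apply INR_lt in H; lia. }
    assert (Hrj : r * INR (S j) <= INR m - INR j).
    { assert (r * INR (k+1) = INR m / exp 1).
      { unfold r. field. split; nra. }
      assert (INR m / exp 1 <= INR m / 2).
      { unfold Rdiv. apply Rmult_le_compat_l; auto. apply Rinv_le_contravar; lra. }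
      rewrite S_INR in K1 |- *. nra. }
    assert (r * INR (S j) * INR (Bs m j) <= INR (S j) * INR (Bs m (S j))) by nra.
    nra.
Qed.

Lemma ratio_iter : forall m k l p, (l + p <= S k)%nat ->
  (INR m / (exp 1 * INR (k+1))) ^ p * INR (Bs m l) <= INR (Bs m (l + p)).
Proof.
  intros m k l p. induction p; intros Hp.
  - simpl. rewrite Nat.add_0_r. lra.
  - pose proof e_gt2.
    assert (r0 : 0 <= INR m / (exp 1 * INR (k+1))).
    { apply Rmult_le_pos; [apply pos_INR|]. left; apply Rinv_0_lt_compat.
      assert (0 < INR (k+1)) by (apply lt_0_INR; lia). nra. }
    specialize (IHp ltac:(lia)).
    replace (l + S p)%nat with (S (l + p)) by lia.
    pose proof (ratio_step m k (l+p) ltac:(lia)).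
    simpl. nra.
Qed.

Lemma real_bound : forall m k l n, (l <= k)%nat -> (Bs m (S k) <= n * Bs m l)%nat ->
  INR m <= exp 1 * INR (k + 1) * natpow n (1 / INR (k + 1 - l)).
Proof.
  intros m k l n Hlk HB.
  set (p := (k + 1 - l)%nat).
  pose proof (ratio_iter m k l p ltac:(unfold p; lia)) as Hi.
  replace (l + p)%nat with (S k) in Hi by (unfold p; lia).
  apply le_INR in HB. rewrite mult_INR in HB.
  set (r := INR m / (exp 1 * INR (k+1))) in *.
  assert (Bp : 1 <= INR (Bs m l)) by (apply (le_INR 1); apply Bs_pos).
  assert (Hn : r ^ p <= INR n) by nra.
  pose proof e_gt2.
  assert (K0 : 0 < INR (k+1)) by (apply lt_0_INR; lia).
  assert (r0 : 0 <= r) by (unfold r; apply Rmult_le_pos; [apply pos_INR|]; left; apply Rinv_0_lt_compat; nra).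
  assert (Hmr : INR m = exp 1 * INR (k+1) * r) by (unfold r; field; split; lra).
  destruct n as [|n'].
  - exfalso. pose proof (Bs_pos m (S k)) as B1. apply (le_INR 1) in B1. simpl in *. nra.
  - unfold natpow. rewrite Hmr. apply Rmult_le_compat_l; [nra|].
    assert (P0 : 0 < INR p) by (apply lt_0_INR; unfold p; lia).
    destruct r0 as [r0|r0].
    + assert (r = Rpower (r ^ p) (1 / INR p)).
      { rewrite <- Rpower_pow by auto. rewrite Rpower_mult.
        replace (INR p * (1 / INR p)) with 1 by (field; lra). rewrite Rpower_1; auto. }
      rewrite H0 at 1. apply Rle_Rpower_l.
      * left; apply Rdiv_lt_0_compat; lra.
      * split; auto. apply pow_lt; auto.
    + rewrite <- r0. left. unfold Rpower. apply exp_pos.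
Qed.

Theorem mainTheorem5 (X : Type) (n : nat) (h : nat -> X -> bool)
  (hinj : inj_below n h) (k l : nat) (hkl : (l <= k)%nat) :
  ELdim_le (Hl (fin_class n h) l) k
    (exp 1 * INR (k + 1) * natpow n (1 / INR (k + 1 - l))).
Proof.
  intros m [t [Hok Hdiff]].
  apply real_bound; auto.
  assert (C := core X n h l t nil Hok (NoDup_nil _) (S k) m
    (fun j len Hp Hj => Hdiff j len Hp ltac:(lia))).
  unfold W in C. simpl in C.
  rewrite (sumn_ext _ (fun _ => Bs m l)) in C.
  - rewrite sumn_const in C. exact C.
  - intros i. unfold tw. destruct (Nat.leb_spec 0 l); [|lia]. rewrite Nat.sub_0_r. reflexivity.
Qed.
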